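(* In the standing setup, let $y\in K$ satisfy $0\le\langle x_{n+1}-y,\,x_n-x_{n+1}\rangle$ for all integers $n\ge1$. Then $y=0$.
   Context: Standing setup. $X$ is a real Hilbert space. $u\colon[0,\infty)\to X$ satisfies $\langle u(s),u(t)\rangle=\exp(-(s-t)^2)$ for all $s,t\ge0$. $(d_n)_{n\ge1}$ satisfies: $d_n>0$, $\sum_k d_k^2<\infty$, $t_n:=\sum_{k=1}^{n-1}d_k\to+\infty$, $d_1\le1/8$, $d_{n+1}\le d_n/(1+64d_n^2)$ for all $n$. $\rho_1:=1$, $\rho_{n+1}:=\rho_n\exp(-d_n^2)$, $x_n:=\rho_nu(t_n)$. $K$ denotes the smallest closed convex cone containing $\{x_n:n\ge1\}$, i.e. the closed convex hull of $\{\lambda x_n:\lambda\ge0,n\ge1\}$. *)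

(* Defs.v *)
From HB Require Import structures.
From mathcomp Require Import all_boot all_order all_algebra.
From mathcomp Require Import all_classical all_reals all_analysis.
Set Implicit Arguments. Unset Strict Implicit. Unset Printing Implicit Defensive.
Import Order.TTheory GRing.Theory Num.Theory.
Import numFieldNormedType.Exports.
Local Open Scope classical_set_scope.
Local Open Scope ring_scope.

(* A real Hilbert space is modelled as a complete normed space X over R
   together with an inner product [ip] (symmetric, linear in the first
   argument) whose induced norm is the norm of X. *)
Definition is_inner_product (R : realType) (X : normedModType R)
  (ip : X -> X -> R) : Prop :=
  [/\ (forall x y, ip x y = ip y x),
      (forall a x y z, ip (a *: x + y) z = a * ip x z + ip y z)
    & (forall x, ip x x = `|x| ^+ 2)].

Definition closed_convex_cone (R : realType) (X : normedModType R)
  (C : set X) : Prop :=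
  [/\ closed C,
      (forall x y (a : R), C x -> C y -> 0 <= a -> a <= 1 ->
          C (a *: x + (1 - a) *: y))
    & (forall x (l : R), C x -> 0 <= l -> C (l *: x))].

Definition cone_hull (R : realType) (X : normedModType R)
  (v : nat -> X) : set X :=
  \bigcap_(C in [set C : set X | closed_convex_cone C /\
                                 (forall n, (1 <= n)%N -> C (v n))]) C.

Definition tseq (R : realType) (d : nat -> R) (n : nat) : R :=
  \sum_(1 <= k < n) d k.

(* rho_1 = 1, rho_{n+1} = rho_n * exp(-d_n^2)  (rho_0 is irrelevant, set to 1) *)
Fixpoint rho (R : realType) (d : nat -> R) (n : nat) : R :=
  match n with
  | 0 => 1
  | m.+1 => if m is 0 then 1 else rho d m * expR (- (d m ^+ 2))
  end.

(* Main.v *)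
Require Import Defs.
From HB Require Import structures.
From mathcomp Require Import all_boot all_order all_algebra.
From mathcomp Require Import all_classical all_reals all_analysis.
From mathcomp Require Import ring lra.
Import Order.TTheory GRing.Theory Num.Theory.
Import numFieldNormedType.Exports.
Local Open Scope classical_set_scope.
Local Open Scope ring_scope.

Section IP.
Context {R : realType} {X : normedModType R} {ip : X -> X -> R}.
Context (hip : is_inner_product ip).

Lemma ipC x y : ip x y = ip y x. Proof. by case: hip. Qed.
Lemma ipDZl a x y z : ip (a *: x + y) z = a * ip x z + ip y z.
Proof. by case: hip. Qed.
Lemma ipxx x : ip x x = `|x| ^+ 2. Proof. by case: hip. Qed.
Lemma ip0l z : ip 0 z = 0.
Proof. have := ipDZl 1 0 0 z; rewrite scaler0 addr0 mul1r => h; lra. Qed.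
Lemma ipZl a x z : ip (a *: x) z = a * ip x z.
Proof. by have := ipDZl a x 0 z; rewrite addr0 ip0l addr0. Qed.
Lemma ipDl x y z : ip (x + y) z = ip x z + ip y z.
Proof. by have := ipDZl 1 x y z; rewrite scale1r mul1r. Qed.
Lemma ipNl x z : ip (- x) z = - ip x z.
Proof. by rewrite -scaleN1r ipZl mulN1r. Qed.
Lemma ipBl x y z : ip (x - y) z = ip x z - ip y z.
Proof. by rewrite ipDl ipNl. Qed.
Lemma ipZr a x z : ip z (a *: x) = a * ip z x.
Proof. by rewrite ipC ipZl ipC. Qed.
Lemma ipDr x y z : ip z (x + y) = ip z x + ip z y.
Proof. by rewrite ipC ipDl !(ipC z). Qed.
Lemma ipBr x y z : ip z (x - y) = ip z x - ip z y.
Proof. by rewrite ipC ipBl !(ipC z). Qed.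

Lemma ip_le_norm w x : ip w x <= `|w| * `|x|.
Proof.
have h := ipxx (w + x). rewrite ipDl !ipDr !ipxx (ipC x w) in h.
have := ler_normD w x. have := normr_ge0 w; have := normr_ge0 x.
have := normr_ge0 (w + x). nra.
Qed.

Lemma ip_abs_le w x : `|ip w x| <= `|w| * `|x|.
Proof.
rewrite ler_norml; apply/andP; split; last exact: ip_le_norm.
have := ip_le_norm (- w) x; rewrite ipNl normrN; lra.
Qed.

Lemma closure_approx (A : set X) z : closure A z ->
  forall e, 0 < e -> exists w, A w /\ `|z - w| < e.
Proof.
move=> cz e e0. have [w [Aw bw]] := cz _ (nbhsx_ballx z _ e0).
exists w; split => //. by rewrite -ball_normE in bw.
Qed.
End IP.

Lemma expR_le1 (R : realType) (x : R) : x <= 0 -> expR x <= 1.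
Proof. by move=> h; rewrite -expR0 ler_expR. Qed.

Theorem lemma6p4 (R : realType) (X : completeNormedModType R)
  (ip : X -> X -> R) (u : R -> X) (d : nat -> R) (y : X) :
  is_inner_product ip ->
  (forall s t : R, 0 <= s -> 0 <= t -> ip (u s) (u t) = expR (- ((s - t) ^+ 2))) ->
  (forall n, (1 <= n)%N -> 0 < d n) ->
  cvg (series (fun k => d k.+1 ^+ 2) @ \oo) ->
  tseq d @ \oo --> +oo ->
  d 1%N <= 1 / 8 ->
  (forall n, (1 <= n)%N -> d n.+1 <= d n / (1 + 64 * d n ^+ 2)) ->
  cone_hull (fun n => rho d n *: u (tseq d n)) y ->
  (forall n, (1 <= n)%N ->
     0 <= ip (rho d n.+1 *: u (tseq d n.+1) - y)
             (rho d n *: u (tseq d n) - rho d n.+1 *: u (tseq d n.+1))) ->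
  y = 0.
Proof.
move=> hip hu hd _ ht _ _ hy hmon.
set x := fun n => rho d n *: u (tseq d n).
have t0 : forall n, 0 <= tseq d n.
  move=> n; rewrite /tseq big_nat_cond; apply: sumr_ge0 => k /andP[/andP[k1 _] _].
  exact/ltW/hd.
have tS : forall n, (1 <= n)%N -> tseq d n.+1 = tseq d n + d n.
  by move=> n n1; rewrite /tseq big_nat_recr.
have rS : forall n, (1 <= n)%N -> rho d n.+1 = rho d n * expR (- (d n ^+ 2)).
  by case.
have r01 : forall n, 0 <= rho d n <= 1.
  elim=> [|[|m] IH]; [by rewrite /= ler01 lexx|by rewrite /= ler01 lexx|].
  rewrite rS //.
  have e0 := expR_ge0 (- (d m.+1 ^+ 2)).
  have e1 : expR (- (d m.+1 ^+ 2)) <= 1 by rewrite expR_le1 // oppr_le0 sqr_ge0.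
  move/andP: IH => [h0 h1]; apply/andP; split; nra.
have ipx : forall m n, ip (x m) (x n) =
    rho d m * rho d n * expR (- ((tseq d m - tseq d n) ^+ 2)).
  move=> m n; rewrite /x (ipZl hip) (ipZr hip) hu //; ring.
have nx : forall n, `|x n| <= 1.
  move=> n; have := ipxx hip (x n); rewrite ipx subrr (expr2 (0:R)) mulr0 oppr0 expR0 mulr1.
  have := r01 n; have := normr_ge0 (x n); move=> ? /andP[? ?]; nra.
have mono : forall n, (1 <= n)%N -> ip y (x n) <= ip y (x n.+1).
  move=> n n1; have := hmon n n1; rewrite -/(x n) -/(x n.+1).
  rewrite (ipBr hip) !(ipBl hip) (ipx n.+1 n) (ipx n.+1 n.+1) subrr (expr2 (0:R)) mulr0.
  rewrite oppr0 expR0 mulr1 tS // rS // (addrC (tseq d n) (d n)) addrK; nra.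
pose C' := [set z | forall e, 0 < e -> exists N, forall n, (N <= n)%N ->
                      `|ip z (x n)| <= e].
have yC' : C' y.
  apply: hy; split; last first.
    move=> m m1 e e0.
    have [N HN] : exists N, forall n, (N <= n)%N ->
        tseq d m + 1 + `|ln e| <= tseq d n.
      by have [N _ HN] := (cvgryPge _).1 ht (tseq d m + 1 + `|ln e|); exists N.
    exists N => n /HN hn; rewrite ipx.
    have h1 : - ln e <= `|ln e| by rewrite -normrN ler_norm.
    have hq : - ((tseq d m - tseq d n) ^+ 2) <= ln e.
      have := normr_ge0 (ln e); nra.
    have hE : expR (- ((tseq d m - tseq d n) ^+ 2)) <= e.
      by rewrite -[X in _ <= X](@lnK _ e) ?posrE // ler_expR.
    have := r01 m; have := r01 n; have := expR_ge0 (- ((tseq d m - tseq d n) ^+ 2)).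
    move=> E /andP[a0 a1] /andP[b0 b1].
    rewrite ger0_norm; last by rewrite !mulr_ge0.
    apply: le_trans hE; rewrite -[X in _ <= X]mul1r; apply: ler_wpM2r => //; nra.
  split.
  - move=> z cz e e0.
    have e20 : 0 < e / 2 by rewrite divr_gt0.
    have [w [Cw hzw]] := closure_approx _ _ cz _ e20.
    have [N HN] := Cw _ e20.
    exists N => n /HN hw.
    have ht1 := ip_abs_le hip (z - w) (x n).
    rewrite (ipBl hip) in ht1.
    have := ler_normD (ip w (x n)) (ip z (x n) - ip w (x n)).
    rewrite addrC subrK.
    have := nx n; have := normr_ge0 (z - w); have := normr_ge0 (x n). nra.
  - move=> z w a Cz Cw a0 a1 e e0.
    have [N1 H1] := Cz _ e0; have [N2 H2] := Cw _ e0.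
    exists (maxn N1 N2) => n; rewrite geq_max => /andP[n1 n2].
    have := H1 _ n1; have := H2 _ n2.
    rewrite (ipDl hip) !(ipZl hip) => hw hz.
    have a1' : 0 <= 1 - a by rewrite subr_ge0.
    apply: le_trans (ler_normD _ _) _.
    rewrite !normrM (ger0_norm a0) (ger0_norm a1').
    nra.
  - move=> z l Cz l0 e e0.
    have l1 : 0 < l + 1 by lra.
    set e' := e / (l + 1).
    have e'0 : 0 < e' by rewrite divr_gt0.
    have he' : e' * (l + 1) = e by rewrite /e' divfK // gt_eqF.
    have [N HN] := Cz _ e'0.
    exists N => n /HN h; rewrite (ipZl hip) normrM (ger0_norm l0).
    have := normr_ge0 (ip z (x n)); nra.
have neg : forall m, (1 <= m)%N -> ip y (x m) <= 0.
  move=> m m1.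
  have mk : forall k, ip y (x m) <= ip y (x (m + k)%N).
    elim=> [|k IH]; first by rewrite addn0.
    apply: le_trans IH _; rewrite addnS; apply: mono.
    by apply: leq_trans m1 (leq_addr _ _).
  rewrite leNgt; apply/negP => hp.
  have hp2 : 0 < ip y (x m) / 2 by rewrite divr_gt0.
  have [N HN] := yC' _ hp2.
  have := HN (m + N)%N (leq_addl _ _).
  have := mk N. have := ler_norm (ip y (x (m + N)%N)). lra.
pose C := [set z | ip y z <= 0].
have yC : C y.
  apply: hy; split; last exact: neg.
  split.
  - move=> z cz; rewrite /C /=; rewrite leNgt; apply/negP => hp.
    have n1 : 0 < `|y| + 1 by have := normr_ge0 y; lra.
    set q := ip y z / (`|y| + 1).
    have q0 : 0 < q by rewrite divr_gt0.
    have hq : q * (`|y| + 1) = ip y z by rewrite /q divfK // gt_eqF.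
    have [w [Cw hzw]] := closure_approx _ _ cz _ q0.
    have := ip_le_norm hip y (z - w); rewrite (ipBr hip).
    have := normr_ge0 y; have := normr_ge0 (z - w).
    rewrite /C /= in Cw. nra.
  - move=> z w a Cz Cw a0 a1; rewrite /C /= (ipDr hip) !(ipZr hip).
    rewrite /C /= in Cz Cw; nra.
  - move=> z l Cz l0; rewrite /C /= (ipZr hip); rewrite /C /= in Cz; nra.
apply/normr0_eq0.
have := ipxx hip y; rewrite /C /= in yC; have := normr_ge0 y; nra.
Qed.
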